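(* Let $(S,* )$ be a finite cycle set of class $d$ with permutation group $\mathcal G$. Then $d$ and $|\mathcal G|$ have the same set of prime divisors. In particular, $d$ is a prime power if and only if $|\mathcal G|$ is a prime power.
   Context: A cycle set is a set $S$ with a binary operation $*$ such that each $t\mapsto s*t$ is bijective and $(s*t)*(s*u)=(t*s)*(t*u)$ for all $s,t,u$. Write $S=\{s_1,\dots,s_n\}$, let $\psi(s)\in\mathfrak S_n$ satisfy $s_i*s_j=s_{\psi(s_i)(j)}$, and $\mathcal G=\langle\psi(s_1),\dots,\psi(s_n)\rangle\le\mathfrak S_n$. With $T(s)=s*s$ and $\psi_k(s)=\psi(T^{k-1}(s))\circ\cdots\circ\psi(s)$, the class $d$ is the least integer $d\ge1$ with $\psi_d(s)=\mathrm{id}$ for all $s\in S$. *)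

(* Defs.v *)
From mathcomp Require Import all_boot all_fingroup.
Set Implicit Arguments. Unset Strict Implicit. Unset Printing Implicit Defensive.
Local Open Scope group_scope.

Record cycleSet (S : finType) := CycleSet {
  cs_op : S -> S -> S;
  cs_bij : forall s, bijective (cs_op s);
  cs_ax : forall s t u,
    cs_op (cs_op s t) (cs_op s u) = cs_op (cs_op t s) (cs_op t u)
}.

Section CycleSetDefs.
Variables (S : finType) (C : cycleSet S).

Definition psi (s : S) : {perm S} := perm (bij_inj (cs_bij C s)).

Definition permGroup : {group {perm S}} := <<[set psi s | s in S]>>%G.

Definition Tsq (s : S) : S := cs_op C s s.

(* psi_k(s) = psi(T^{k-1} s) o ... o psi(s)  (psi(s) applied first).
   In mathcomp, (p * q) x = q (p x), so we multiply on the right. *)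
Fixpoint psik (k : nat) (s : S) : {perm S} :=
  match k with
  | 0 => 1
  | k'.+1 => psik k' s * psi (iter k' Tsq s)
  end.

Definition is_class (d : nat) : Prop :=
  [/\ 0 < d, (forall s, psik d s = 1)
    & (forall d', 0 < d' < d -> ~ (forall s, psik d' s = 1))].

End CycleSetDefs.

Definition prime_power (n : nat) : Prop :=
  exists p k, prime p /\ n = (p ^ k)%N.

(* Main.v *)
Require Import Defs.
From mathcomp Require Import all_boot all_fingroup zify.
From mathcomp Require Import pgroup sylow cyclic.
Set Implicit Arguments. Unset Strict Implicit. Unset Printing Implicit Defensive.
Local Open Scope group_scope.

Lemma fixfree (T : finType) (f : T -> T) p : prime p ->
  (forall x, iter p f x = x) -> (forall x, f x != x) -> p %| #|T|.
Proof.
move=> pp fp nf.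
have p0 := prime_gt0 pp.
have finj : injective f.
  apply: (can_inj (g := iter p.-1 f)) => x.
  by rewrite -iterSr prednK.
pose g := perm finj.
have gp : (g ^+ p = 1)%g.
  by apply/permP => x; rewrite permX perm1 (eq_iter (permE finj)) fp.
have pG : p.-group <[g]>%G.
  rewrite /pgroup -orderE; apply: pnat_dvd (pnat_id pp).
  by rewrite order_dvdn gp.
have actT : [acts <[g]>, on [set: T] | 'P].
  by apply/actsP => a _ x; rewrite !inE.
have := pgroup_fix_mod pG actT.
have -> : 'Fix_([set: T] | 'P)(<[g]>) = set0.
  apply/setP=> x; rewrite in_set0; apply/negP => Hx0.
  have /afixP Hx : x \in 'Fix_('P)(<[g]>) by move: Hx0; rewrite inE => /andP[].
  have := Hx g (cycle_id g); rewrite /= /aperm /g permE => /eqP; by rewrite (negbTE (nf x)).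
rewrite cards0 mod0n cardsT => /eqP H.
by rewrite /dvdn H.
Qed.

Section Main.
Variables (S : finType) (C : cycleSet S).
Local Notation sg := (psi C).
Local Notation op := (cs_op C).

Lemma sgE s t : sg s t = op s t. Proof. by rewrite /psi permE. Qed.

Lemma eqinv (g : {perm S}) a b : (a == g b) = (g^-1 a == b).
Proof. by apply/eqP/eqP => [->|<-]; rewrite ?permK ?permKV. Qed.

Lemma invM_app (g h : {perm S}) z : g^-1 (h^-1 z) = (g * h)^-1 z.
Proof. by rewrite invMg permM. Qed.

Definition sumv (v : {ffun S -> nat}) := (\sum_y v y)%N.
Definition dec x (v : {ffun S -> nat}) : {ffun S -> nat} :=
  [ffun z => v ((sg x)^-1 z) - ((sg x)^-1 z == x)].

Fixpoint rho_f n (v : {ffun S -> nat}) : {perm S} :=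
  if n is n'.+1 then
    if [pick x | 0 < v x] is Some x then sg x * rho_f n' (dec x v) else 1
  else 1.

Lemma rho_fS n v : rho_f n.+1 v =
  if [pick x | 0 < v x] is Some x then sg x * rho_f n (dec x v) else 1.
Proof. by []. Qed.

Definition rho (v : {ffun S -> nat}) := rho_f (sumv v) v.

Lemma le_sum (v : {ffun S -> nat}) x : v x <= sumv v.
Proof. by rewrite /sumv (bigD1 x) //= leq_addr. Qed.

Lemma sum_sub1 (v : {ffun S -> nat}) x : 0 < v x ->
  (\sum_y (v y - (y == x)) = (sumv v).-1)%N.
Proof.
move=> vx; rewrite /sumv (bigD1 x) //= [in RHS](bigD1 x) //= eqxx.
rewrite (eq_bigr (fun y => v y)); last by move=> y /negbTE ->; rewrite subn0.
move: (\sum_(i | i != x) v i) => r; rewrite subn1 -subn1 -[(v x + r).-1]subn1 addnBAC // .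
Qed.

Lemma sum_dec x (v : {ffun S -> nat}) : 0 < v x -> sumv (dec x v) = (sumv v).-1.
Proof.
move=> vx; rewrite /sumv (reindex_inj (@perm_inj _ (sg x))) /=.
rewrite -(sum_sub1 vx); apply: eq_bigr => y _; by rewrite ffunE permK.
Qed.

Lemma key_perm x0 x : sg x0 * sg (sg x0 x) = sg x * sg (sg x x0).
Proof. by apply/permP => u; rewrite !permM !sgE cs_ax. Qed.

Lemma key_vec (v : {ffun S -> nat}) x0 x : dec (sg x0 x) (dec x0 v) = dec (sg x x0) (dec x v).
Proof.
apply/ffunP => z; rewrite !ffunE (eqinv (sg x0)) (eqinv (sg x)) !invM_app.
by rewrite key_perm subnAC.
Qed.

Lemma rhoE n : forall (v : {ffun S -> nat}) x, sumv v = n.+1 -> 0 < v x ->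
  rho_f n.+1 v = sg x * rho_f n (dec x v).
Proof.
elim: n => [|n IH] v x sv vx; rewrite [LHS]rho_fS; case: pickP => [x0 vx0|/(_ x)];
  try by rewrite vx.
- have [->//|nx] := eqVneq x0 x.
  have := sum_dec vx0; rewrite sv /= => sd.
  have := le_sum (dec x0 v) (sg x0 x).
  by rewrite sd ffunE permK eq_sym (negbTE nx) subn0 leqNgt vx.
- have [->//|nx] := eqVneq x0 x.
  have sd0 := sum_dec vx0; rewrite sv /= in sd0.
  have sd := sum_dec vx; rewrite sv /= in sd.
  have p0 : 0 < dec x0 v (sg x0 x) by rewrite ffunE permK eq_sym (negbTE nx) subn0.
  have p1 : 0 < dec x v (sg x x0) by rewrite ffunE permK (negbTE nx) subn0.
  by rewrite (IH _ _ sd0 p0) (IH _ _ sd p1) !mulgA key_perm key_vec.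
Qed.

Lemma rho_dec (v : {ffun S -> nat}) x : 0 < v x -> rho v = sg x * rho (dec x v).
Proof.
move=> vx; rewrite /rho (sum_dec vx).
have := le_sum v x; case E: (sumv v) => [|n] /=; first by rewrite leqNgt vx.
by move=> _; rewrite -rho_fS (rhoE E vx).
Qed.

Lemma rho0 (v : {ffun S -> nat}) : sumv v = 0 -> rho v = 1.
Proof. by rewrite /rho => ->. Qed.

Lemma sum0 (v : {ffun S -> nat}) : sumv v = 0 -> forall y, v y = 0.
Proof. by move=> s0 y; have := le_sum v y; rewrite s0; case: (v y). Qed.

Lemma exists_pos (v : {ffun S -> nat}) : 0 < sumv v -> exists x, 0 < v x.
Proof.
move=> sp; apply/existsP; apply: contraLR sp; rewrite negb_exists => /forallP H.
rewrite -leqNgt leqn0 /sumv; apply/eqP/big1 => y _.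
by have := H y; rewrite lt0n negbK => /eqP.
Qed.

Definition comp (a b : {ffun S -> nat}) : {ffun S -> nat} := [ffun y => a y + b (rho a y)].

Lemma rho_comp (a b : {ffun S -> nat}) : rho (comp a b) = rho a * rho b.
Proof.
move: {2}(sumv a) (leqnn (sumv a)) => n; elim: n a => [|n IH] a Ha;
  have [s0|spos] := posnP (sumv a).
- have a0 := sum0 s0; rewrite (rho0 s0) mul1g; congr rho; apply/ffunP => y.
  by rewrite ffunE a0 (rho0 s0) perm1.
- by move: Ha; rewrite leqNgt spos.
- have a0 := sum0 s0; rewrite (rho0 s0) mul1g; congr rho; apply/ffunP => y.
  by rewrite ffunE a0 (rho0 s0) perm1.
have [x ax] := exists_pos spos.
have cx : 0 < comp a b x by rewrite ffunE ltn_addr.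
rewrite (rho_dec cx) (rho_dec ax) -mulgA; congr (_ * _).
have -> : dec x (comp a b) = comp (dec x a) b.
  apply/ffunP => z; rewrite !ffunE (rho_dec ax) permM permKV addnBAC //.
  by case: eqP => [->|].
apply: IH; rewrite sum_dec //; lia.
Qed.

Definition ev (k : nat) (s : S) : {ffun S -> nat} := [ffun y => (k * (y == s))%N].

Lemma psikS k s : psik C k.+1 s = psik C k s * sg (iter k (Tsq C) s).
Proof. by []. Qed.

Lemma psikS' k s : psik C k.+1 s = sg s * psik C k (Tsq C s).
Proof.
elim: k s => [|k IH] s; first by rewrite /= mul1g mulg1.
by rewrite [LHS]psikS IH [in RHS]psikS -mulgA iterSr.
Qed.

Lemma rho_ev k s : rho (ev k s) = psik C k s.
Proof.
elim: k s => [|k IH] s.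
  by rewrite rho0 // /sumv big1 // => y _; rewrite ffunE.
rewrite (rho_dec (x:=s)) ?ffunE ?eqxx ?muln1 // psikS' -IH; congr (_ * rho _).
apply/ffunP => z; rewrite !ffunE -eqinv /Tsq -sgE.
by case: eqP => _; rewrite ?muln1 ?muln0 ?subn1.
Qed.


Lemma rho_in_G (v : {ffun S -> nat}) : rho v \in permGroup C.
Proof.
move: {2}(sumv v) (leqnn (sumv v)) => n; elim: n v => [|n IH] v Hv;
  have [s0|spos] := posnP (sumv v); try by rewrite rho0 // group1.
- by move: Hv; rewrite leqNgt spos.
have [x vx] := exists_pos spos.
rewrite (rho_dec vx) groupM //; first by apply: mem_gen; apply: imset_f.
apply: IH; rewrite sum_dec //; lia.
Qed.

Lemma psik_in_G k s : psik C k s \in permGroup C.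
Proof. by rewrite -rho_ev rho_in_G. Qed.

Lemma inv_t D t u : psik C D t = 1 -> psik C D (sg u t) = 1.
Proof.
move=> Ht.
pose w : {ffun S -> nat} := [ffun y => (y == u) + D * (y == t)]%N.
have e1 : w = comp (ev 1 u) (ev D (sg u t)).
  apply/ffunP => y; rewrite !ffunE rho_ev /= mul1g mul1n.
  by rewrite (inj_eq perm_inj).
have e2 : w = comp (ev D t) (ev 1 u).
  by apply/ffunP => y; rewrite !ffunE rho_ev Ht perm1 mul1n addnC.
move: (erefl (rho w)); rewrite {1}e1 e2 !rho_comp !rho_ev Ht mul1g /= mul1g.
by move=> H; apply: (mulgI (sg u)); rewrite mulg1.
Qed.

Lemma invG D t g : g \in permGroup C -> psik C D t = 1 -> psik C D (g t) = 1.
Proof.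
pose H := [set g : {perm S} | [forall t, (psik C D t == 1) ==> (psik C D (g t) == 1)]].
have gH : group_set H.
  apply/group_setP; split.
    by rewrite inE; apply/forallP => y; rewrite perm1; apply/implyP.
  move=> a b; rewrite !inE => /forallP Ha /forallP Hb; apply/forallP => y.
  apply/implyP => /(implyP (Ha y)) /(implyP (Hb (a y))).
  by rewrite permM.
move=> Gg Ht.
have sub : permGroup C \subset Group gH.
  change (<<[set psi C s | s in S]>> \subset Group gH); rewrite gen_subG.
  apply/subsetP => x /imsetP[u _ ->]; rewrite inE; apply/forallP => y.
  by apply/implyP => /eqP /(inv_t u) ->.
have := subsetP sub g Gg.
by rewrite inE => /forallP /(_ t) /implyP /(_ (introT eqP Ht)) /eqP.
Qed.

Section Period.
Variables (d : nat) (Hd : forall s, psik C d s = 1).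

Lemma rho_add_ev (v : {ffun S -> nat}) s :
  rho [ffun y => ev d s y + v y]%N = rho v.
Proof.
have -> : [ffun y => ev d s y + v y]%N = comp (ev d s) v.
  by apply/ffunP => y; rewrite !ffunE rho_ev Hd perm1.
by rewrite rho_comp rho_ev Hd mul1g.
Qed.

Lemma rho_addm (m : {ffun S -> nat}) : forall (v : {ffun S -> nat}),
  rho [ffun y => v y + d * m y]%N = rho v.
Proof.
move: {2}(sumv m) (leqnn (sumv m)) => n; elim: n m => [|n IH] m Hm v;
  have [s0|spos] := posnP (sumv m).
- by congr rho; apply/ffunP => y; rewrite ffunE (sum0 s0) muln0 addn0.
- by move: Hm; rewrite leqNgt spos.
- by congr rho; apply/ffunP => y; rewrite ffunE (sum0 s0) muln0 addn0.
have [x mx] := exists_pos spos.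
pose m' : {ffun S -> nat} := [ffun y => m y - (y == x)]%N.
have sm' : sumv m' = (sumv m).-1.
  by rewrite /sumv -(sum_sub1 mx); apply: eq_bigr => y _; rewrite ffunE.
have -> : [ffun y => v y + d * m y]%N =
          [ffun y => ev d x y + [ffun y => v y + d * m' y]%N y]%N.
  apply/ffunP => y; rewrite !ffunE; case: eqP => [->|_]; last by rewrite muln0 subn0.
  rewrite muln1 subn1; move: mx; case: (m x) => //= k _; rewrite mulnS; lia.
rewrite rho_add_ev IH //; lia.
Qed.

Lemma rho_congr (v v' : {ffun S -> nat}) :
  (forall y, v y %% d = v' y %% d) -> rho v = rho v'.
Proof.
have vm : forall w : {ffun S -> nat}, rho w = rho [ffun y => w y %% d].
  move=> w; rewrite -(rho_addm [ffun y => w y %/ d] [ffun y => w y %% d]); congr rho.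
  by apply/ffunP => y; rewrite !ffunE addnC mulnC -divn_eq.
by move=> H; rewrite (vm v) (vm v'); congr rho; apply/ffunP => y; rewrite !ffunE H.
Qed.

End Period.


Section Count.
Variables (d : nat) (d0 : 0 < d) (Hd : forall s, psik C d s = 1).

Definition toA (v : {ffun S -> nat}) : {ffun S -> 'I_d} :=
  [ffun y => Ordinal (ltn_pmod (v y) d0)].
Definition valv (a : {ffun S -> 'I_d}) : {ffun S -> nat} :=
  [ffun y => nat_of_ord (a y)].
Definition phi a := rho (valv a).

Lemma phi_toA v : phi (toA v) = rho v.
Proof. by apply: (rho_congr Hd) => y; rewrite !ffunE /= modn_mod. Qed.

Lemma G_img : permGroup C \subset [set phi a | a : {ffun S -> 'I_d}].
Proof.
have gI : group_set [set phi a | a : {ffun S -> 'I_d}].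
  apply/group_setP; split.
    apply/imsetP; exists (toA [ffun => 0%N]) => //.
    by rewrite phi_toA rho0 // /sumv big1 // => y _; rewrite ffunE.
  move=> x y /imsetP[a _ ->] /imsetP[b _ ->]; apply/imsetP.
  by exists (toA (comp (valv a) (valv b))) => //; rewrite phi_toA rho_comp.
change (<<[set psi C s | s in S]>> \subset Group gI); rewrite gen_subG.
apply/subsetP => x /imsetP[s _ ->]; apply/imsetP; exists (toA (ev 1 s)) => //.
by rewrite phi_toA rho_ev /= mul1g.
Qed.

Definition K := [set a : {ffun S -> 'I_d} | phi a == 1].

Lemma fib g : g \in permGroup C -> #|[set b | phi b == g]| = #|K|.
Proof.
move=> Gg; have /imsetP[a _ ga] := subsetP G_img g Gg.
pose f1 (k : {ffun S -> 'I_d}) := toA (comp (valv a) (valv k)).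
have f1inj : injective f1.
  move=> k k' /ffunP H; apply/ffunP => z; apply: val_inj.
  have := H ((rho (valv a))^-1 z); move/(congr1 val); rewrite /= !ffunE /= permKV.
  by move/eqP; rewrite eqn_modDl !modn_small // => /eqP.
have -> : [set b | phi b == g] = f1 @: K.
  apply/setP => b; rewrite inE; apply/eqP/imsetP => [Hb|[k]].
  - pose c : {ffun S -> nat} :=
      [ffun z => val (b (g^-1 z)) + (d - val (a (g^-1 z)))]%N.
    have ec : rho (comp (valv a) c) = rho (valv b).
      apply: (rho_congr Hd) => y; rewrite !ffunE -/(phi a) -ga permK /=.
      have := ltn_ord (a y); move: (nat_of_ord (a y)) (nat_of_ord (b y)) => ay b' lt.
      have -> : (ay + (b' + (d - ay)) = b' + d)%N by lia.
      by rewrite modnDr.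
    have c1 : rho c = 1.
      by move: ec; rewrite rho_comp -/(phi a) -ga -/(phi b) Hb -{2}[g]mulg1 => /mulgI.
    exists (toA c); first by rewrite inE phi_toA c1.
    apply/ffunP => y; apply: val_inj; rewrite !ffunE /= modnDmr -/(phi a) -ga permK /=.
    have := ltn_ord (a y); have := ltn_ord (b y).
    move: (nat_of_ord (a y)) (nat_of_ord (b y)) => ay b' lb lt.
    have -> : (ay + (b' + (d - ay)) = b' + d)%N by lia.
    by rewrite modnDr modn_small.
  - rewrite inE => /eqP k1 ->.
    by rewrite /f1 phi_toA rho_comp -/(phi a) -/(phi k) k1 mulg1 ga.
by rewrite card_imset.
Qed.

Lemma card_A : #|{ffun S -> 'I_d}| = (#|permGroup C| * #|K|)%N.
Proof.
rewrite -[LHS]sum1_card (partition_big phi (mem (permGroup C))) /=; last first.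
  by move=> a _; exact: rho_in_G.
rewrite -sum_nat_const; apply: eq_bigr => g Gg.
by rewrite -(fib Gg) sum1dep_card.
Qed.

End Count.


Lemma G_to_d d (Hc : is_class C d) p : prime p -> p %| #|permGroup C| -> p %| d.
Proof.
case: Hc => d0 Hd _ pp pG.
have := card_A d0 Hd; rewrite card_ffun card_ord => E.
have : p %| d ^ #|S| by rewrite E dvdn_mulr.
by rewrite Euclid_dvdX // => /andP[].
Qed.

Lemma d_to_G d (Hc : is_class C d) p : prime p -> p %| d -> p %| #|permGroup C|.
Proof.
case: Hc => d0 Hd Hmin pp pd; apply/negPn/negP => nG.
pose D := d %/ p.
have HD : forall s, psik C D s = 1.
  move=> s; apply/eqP/negPn/negP => ns.
  pose F (g : {perm S}) := g * psik C D (g s).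
  have F_rho : forall v, F (rho v) = rho [ffun y => v y + D * (y == s)]%N.
    move=> v; rewrite /F -rho_ev -rho_comp; congr rho; apply/ffunP => y.
    by rewrite !ffunE (inj_eq perm_inj).
  have iterF : forall k v, iter k F (rho v) = rho [ffun y => v y + k * D * (y == s)]%N.
    elim=> [|k IH] v.
      by congr rho; apply/ffunP => y; rewrite !ffunE mul0n addn0.
    rewrite iterS IH F_rho; congr rho; apply/ffunP => y; rewrite !ffunE.
    by rewrite mulSn mulnDl (addnC (D * _)%N) addnA.
  have iterp : forall v, iter p F (rho v) = rho v.
    move=> v; rewrite iterF -(rho_addm Hd (ev 1 s) v); congr rho.
    by apply/ffunP => y; rewrite !ffunE mul1n [(p * D)%N]mulnC divnK.
  pose T := {g : {perm S} | g \in permGroup C}.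
  have FG : forall x : T, F (val x) \in permGroup C.
    by move=> x; rewrite /F groupM ?psik_in_G // (valP x).
  pose FT (x : T) : T := exist _ (F (val x)) (FG x).
  have valit : forall k x, val (iter k FT x) = iter k F (val x).
    by elim=> [|k IH] x //=; rewrite IH.
  have := @fixfree T FT p pp.
  rewrite card_sig => H; apply: (negP nG); apply: H.
  - move=> x; apply: val_inj; rewrite valit.
    have /imsetP[a _ ->] := subsetP (G_img d0 Hd) _ (valP x).
    exact: iterp.
  - move=> x; apply/negP => /eqP /(congr1 val) /= Fx.
    have : psik C D (val x s) = 1.
      by apply: (mulgI (val x)); rewrite mulg1.
    move/(invG (groupVr (valP x))); rewrite permK => Hs.
    by rewrite Hs eqxx in ns.
have D0 : 0 < D by rewrite divn_gt0 ?prime_gt0 // dvdn_leq.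
have Dd : D < d by rewrite ltn_Pdiv ?prime_gt1.
by apply: (Hmin D); rewrite ?D0 ?Dd.
Qed.

End Main.

Lemma pp_transfer m n : 0 < n -> (forall p, prime p -> (p %| m) = (p %| n)) ->
  prime_power m -> prime_power n.
Proof.
move=> n0 H [p [k [pp em]]]; exists p, (logn p n); split => //.
have pn : p.-nat n.
  apply/pnatP => // q qp qn; rewrite -H // em Euclid_dvdX // in qn.
  case/andP: qn; rewrite dvdn_prime2 // => /eqP -> _.
by rewrite -p_part part_pnat_id.
Qed.

Theorem mainTheorem6 (S : finType) (C : cycleSet S) (d : nat) :
  is_class C d ->
  (forall p : nat, prime p -> (p %| d) = (p %| #|permGroup C|)) /\
  (prime_power d <-> prime_power #|permGroup C|).
Proof.
move=> Hc; have H : forall p, prime p -> (p %| d) = (p %| #|permGroup C|).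
  by move=> p pp; apply/idP/idP; [apply: d_to_G | apply: G_to_d].
split => //; split => Hp.
- by apply: (pp_transfer _ _ Hp) => //; rewrite cardG_gt0.
- apply: (pp_transfer _ _ Hp); first by case: Hc.
  by move=> p pp; rewrite H.
Qed.
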